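(* The first-price-or-free mechanism satisfies $c$-SCP for every integer $c\ge1$.
   Context: Setting (TFM), with unbounded block size. Each user $i$ has a true value $v_i\ge0$ and submits a single bid $b_i\ge0$. A TFM consists of an inclusion rule (run by the miner) and confirmation, payment and miner-revenue rules (run by the blockchain on the included bids). First-price-or-free mechanism: include all bids; let $b_1\ge\dots\ge b_m$ be the included bids. Only the highest bid $b_1$ is confirmed. If $m=1$, the confirmed user pays nothing; if $m\ge2$, the confirmed user pays $b_1$. The miner receives all payment. Strategic players: the miner together with some users may have those users bid untruthfully after seeing all other bids, inject fake bids (true value $0$), and include any set of available bids instead of following the inclusion rule. Utility of a coalition: miner revenue plus $v-p$ for each confirmed transaction of the coalition with true value $v$ and payment $p$. $c$-SCP: for every coalition of the miner with between $1$ and $c$ users, the joint utility is maximized when its users bid truthfully and the miner follows the mechanism, whatever the other users' bids. *)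

(* Defs.v *)
From HB Require Import structures.
From mathcomp Require Import all_boot all_order all_algebra.
Set Implicit Arguments. Unset Strict Implicit. Unset Printing Implicit Defensive.
Import Order.TTheory GRing.Theory Num.Theory.
Local Open Scope ring_scope.

(** Owner of an included bid, as seen by the strategic coalition:
    - [Outside i] : the (honest) bid of the i-th non-coalition user;
    - [Member j]  : the bid of the j-th coalition user;
    - [Fake]      : a fake bid injected by the coalition (true value 0). *)
Inductive owner := Outside of nat | Member of nat | Fake.

Definition owner_enc (o : owner) : option (nat + nat) :=
  match o with Outside i => Some (inl i) | Member j => Some (inr j) | Fake => None end.
Definition owner_dec (x : option (nat + nat)) : owner :=
  match x with Some (inl i) => Outside i | Some (inr j) => Member j | None => Fake end.
Lemma owner_encK : cancel owner_enc owner_dec. Proof. by case. Qed.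
HB.instance Definition _ := Equality.copy owner (can_type owner_encK).

Section TFM.
Variable R : realFieldType.

Record tfm := TFM {
  confirm : seq R -> nat -> bool;
  pay : seq R -> nat -> R;
  miner_rev : seq R -> R }.

(** First-price-or-free: the confirmed position is the first position
    holding a maximal bid (ties broken by position in the block). *)
Definition top_index (bs : seq R) : nat :=
  find (fun b => all (fun b' => b' <= b) bs) bs.

Definition fpof_confirm (bs : seq R) (k : nat) : bool :=
  (k < size bs)%N && (k == top_index bs).

Definition fpof_pay (bs : seq R) (k : nat) : R :=
  if (size bs <= 1)%N then 0 else nth 0 bs k.

Definition fpof_rev (bs : seq R) : R :=
  \sum_(k < size bs | fpof_confirm bs k) fpof_pay bs k.

Definition fpof : tfm := TFM fpof_confirm fpof_pay fpof_rev.

Definition coal_value (vals : seq R) (o : owner) : R :=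
  match o with Member j => nth 0 vals j | _ => 0 end.

Definition is_coal (o : owner) : bool :=
  match o with Outside _ => false | _ => true end.

Definition coal_utility (M : tfm) (vals : seq R) (d : seq (owner * R)) : R :=
  let bs := map snd d in
  miner_rev M bs +
  \sum_(k < size d | confirm M bs k && is_coal (nth Fake (map fst d) k))
     (coal_value vals (nth Fake (map fst d) k) - pay M bs k).

Definition outside_ids (d : seq (owner * R)) : seq nat :=
  pmap (fun x => if x.1 is Outside i then Some i else None) d.
Definition member_ids (d : seq (owner * R)) : seq nat :=
  pmap (fun x => if x.1 is Member j then Some j else None) d.

(** Blocks the strategic coalition can produce: any subset of the available
    outside bids (unchanged, each at most once), at most one (arbitrary,
    nonnegative) bid per coalition user, and any number of nonnegative fake
    bids, in any order. *)
Definition admissible (vals others : seq R) (d : seq (owner * R)) : Prop :=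
  [/\ uniq (outside_ids d), uniq (member_ids d) &
      forall x, x \in d ->
        match x.1 with
        | Outside i => (i < size others)%N /\ x.2 = nth 0 others i
        | Member j => (j < size vals)%N /\ 0 <= x.2
        | Fake => 0 <= x.2
        end].

(** Honest play: coalition users bid truthfully, the miner includes all
    bids (the inclusion rule "include all"), in any order. *)
Definition honest_bids (vals others : seq R) : seq (owner * R) :=
  [seq (Member j, nth 0 vals j) | j <- iota 0 (size vals)] ++
  [seq (Outside i, nth 0 others i) | i <- iota 0 (size others)].

(** c-side-contract-proofness (c-SCP) of a TFM whose inclusion rule is
    "include all bids". *)
Definition c_SCP (M : tfm) (c : nat) : Prop :=
  forall (vals others : seq R),
    (1 <= size vals <= c)%N ->
    all (fun v => 0 <= v) vals ->
    all (fun b => 0 <= b) others ->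
    forall h d : seq (owner * R),
      perm_eq h (honest_bids vals others) ->
      admissible vals others d ->
      coal_utility M vals d <= coal_utility M vals h.

End TFM.

(* Main.v *)
Require Import Defs.
From mathcomp Require Import all_boot all_order all_algebra.
From mathcomp Require Import zify.
Import Order.TTheory GRing.Theory Num.Theory.
Local Open Scope ring_scope.
Set Implicit Arguments. Unset Strict Implicit.

Section Aux.
Variable R : realFieldType.

Lemma exists_max (s : seq R) : s != [::] -> exists2 m, m \in s & all (fun b => b <= m) s.
Proof.
elim: s => // x s IH _.
case: s IH => [|y s] IH.
  by exists x; rewrite ?mem_seq1 //= lexx.
have [m ms hm] := IH isT.
case: (leP x m) => hxm.
  exists m; first by rewrite inE ms orbT.
  by rewrite /= hxm; exact: hm.
exists x; first by rewrite inE eqxx.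
apply/allP => z; rewrite inE => /orP[/eqP->|zs]; first exact: lexx.
exact: le_trans (allP hm z zs) (ltW hxm).
Qed.

Lemma top_spec (bs : seq R) : bs != [::] ->
  (top_index bs < size bs)%N /\ all (fun b' => b' <= nth 0 bs (top_index bs)) bs.
Proof.
move=> ne; have [m ms hm] := exists_max ne.
have hh : has (fun b => all (fun b' => b' <= b) bs) bs by apply/hasP; exists m.
split; first by rewrite /top_index -has_find.
exact: (nth_find 0 hh).
Qed.

Lemma sum_single (bs : seq R) n (P : nat -> bool) (F : nat -> R) :
  size bs = n -> bs != [::] ->
  \sum_(k < n | fpof_confirm bs k && P k) F k = if P (top_index bs) then F (top_index bs) else 0.
Proof.
move=> hn ne; have [tlt _] := top_spec ne.
have tlt' : (top_index bs < n)%N by rewrite -hn.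
rewrite big_mkcond (bigD1 (Ordinal tlt')) //= big1 ?addr0.
  by rewrite /fpof_confirm tlt eqxx.
move=> k; rewrite -val_eqE /= /fpof_confirm => /negbTE ->.
by rewrite andbF.
Qed.

Lemma util_ne (vals : seq R) (d : seq (owner * R)) : d != [::] ->
  coal_utility (fpof R) vals d =
  let bs := map snd d in let t := top_index bs in let o := nth Fake (map fst d) t in
  if is_coal o then coal_value vals o else fpof_pay bs t.
Proof.
move=> ne.
have ne' : map snd d != [::] by case: d ne.
rewrite /coal_utility /= /fpof_rev.
rewrite (eq_bigl (fun k : 'I_(size (map snd d)) => fpof_confirm (map snd d) k && true));
  last by move=> k; rewrite andbT.
rewrite (sum_single (fun _ => true) (fun k => fpof_pay (map snd d) k) erefl ne').
rewrite (sum_single (fun k => is_coal (nth Fake (map fst d) k))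
  (fun k => coal_value vals (nth Fake (map fst d) k) - fpof_pay (map snd d) k) (size_map _ _) ne') /=.
case: ifP => _; last by rewrite addr0.
by rewrite addrC subrK.
Qed.

End Aux.

Theorem mainTheorem9 (R : realFieldType) (c : nat) :
  (1 <= c)%N -> c_SCP (fpof R) c.
Proof.
move=> _ vals others /andP[hv1 _] vnn onn h d ph [_ _ hadm].
have memh : forall x, (x \in h) = (x \in honest_bids vals others) by apply: perm_mem.
have hne : h != [::].
  apply/negP => /eqP e; have := perm_size ph; rewrite e /honest_bids size_cat !size_map !size_iota.
  by case: (size vals) hv1.
have hne' : map snd h != [::] by case: h hne ph memh.
have [tlt hT] := top_spec hne'.
set T := nth 0 (map snd h) (top_index (map snd h)) in hT.
have inhT : forall x, x \in h -> x.2 <= T.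
  by move=> x xh; apply: (allP hT); apply: map_f.
have memb : forall j, (j < size vals)%N -> (Member j, nth 0 vals j) \in h.
  move=> j hj; rewrite memh mem_cat; apply/orP; left.
  by apply/mapP; exists j; rewrite ?mem_iota.
have memo : forall i, (i < size others)%N -> (Outside i, nth 0 others i) \in h.
  move=> i hi; rewrite memh mem_cat; apply/orP; right.
  by apply/mapP; exists i; rewrite ?mem_iota.
have T0 : 0 <= T.
  have m0 := memb 0%N hv1; have := inhT _ m0; apply: le_trans.
  by apply: (allP vnn); apply: mem_nth.
have Uh : coal_utility (fpof R) vals h = T.
  rewrite util_ne //=.
  rewrite size_map in tlt.
  set t := top_index _ in T tlt hT inhT T0 *.
  have xh : nth (Fake, 0) h t \in h by apply: mem_nth.
  have e1 : nth Fake (map fst h) t = (nth (Fake,0) h t).1 by rewrite (nth_map (Fake,0)).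
  have e2 : T = (nth (Fake,0) h t).2 by rewrite /T (nth_map (Fake,0)).
  rewrite e1 e2.
  move: xh; rewrite memh mem_cat => /orP[] /mapP[j]; rewrite mem_iota => /andP[_ hj] ex; rewrite ex.
    by [].
  rewrite /= /fpof_pay size_map (nth_map (Fake,0)) // ex.
  have : (1 < size h)%N.
    rewrite (perm_size ph) /honest_bids size_cat !size_map !size_iota.
    by rewrite ?add0n in hj; lia.
  by rewrite ltnNge => /negbTE -> /=.
rewrite Uh.
have [->|dne] := eqVneq d [::].
  by rewrite /coal_utility /= /fpof_rev !big_ord0 addr0.
rewrite util_ne //=.
have dne' : map snd d != [::] by case: d dne {hadm}.
have [tlt' _] := top_spec dne'.
rewrite size_map in tlt'.
set t := top_index _ in tlt' *.
have xd : nth (Fake, 0) d t \in d by apply: mem_nth.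
rewrite (nth_map (Fake,0)) //.
have := hadm _ xd.
case E: (nth (Fake,0) d t) => [[i|j|] b] /=.
- move=> [hi eb]; rewrite /fpof_pay; case: ifP => _ //.
  rewrite (nth_map (Fake,0)) // E /= eb; exact: inhT _ (memo i hi).
- move=> [hj _]; exact: (inhT _ (memb j hj)).
- by [].
Qed.
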